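(* There is an absolute constant $C$ such that the following holds. Let $n\ge 4$ be a power of $4$ and let $\mathcal{H}_1$ be as in the context. Let $1\le i<j\le n$, let $i$ lie in block $c_1$ and $j$ in block $c_2$ (possibly $c_1=c_2$), and let $r=\min(c_2-c_1,\ \sqrt{n}-(c_2-c_1))$. Then \[\sum_{d=0}^{\sqrt{n}-1}\mathbb{E}_{h\in\mathcal{H}_1}\left[h_{i+d\sqrt{n}}\,h_{j+d\sqrt{n}}\right]\ \le\ C\,\frac{\lg(r+2)}{(r+1)^2}.\]
   Context: $\lg$ is the base-2 logarithm. Let $n$ be a power of $4$, so $\sqrt{n}$ is an even integer; put $\ell=\sqrt{n}/2$. For $1\le c\le\sqrt n$, the $c$-th block is $\{(c-1)\sqrt n+1,\dots,c\sqrt n\}\subseteq[n]$. The random function $h:[n]\to\{-1,1\}$ drawn from $\mathcal{H}_1$ has mutually independent coordinates, with $\mathbb{P}[h_i=1]=\tfrac12+\tfrac{1}{2(\ell+1-c)}$ if $i$ lies in block $c\le \ell$, and $\mathbb{P}[h_i=1]=\tfrac12-\tfrac{1}{2(c-\ell)}$ if $i$ lies in block $c\ge \ell+1$ (so $\mathbb{E}h_i=\frac{1}{\ell+1-c}$, resp. $-\frac{1}{c-\ell}$). Indices are taken modulo $n$: $h_{i+n}=h_i$ for all integers $i$. *)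

(* Defs.v *)
From Stdlib Require Import Reals Arith.
Open Scope R_scope.

Definition lg (x : R) : R := ln x / ln 2.

Fixpoint rsum (f : nat -> R) (N : nat) : R :=
  match N with O => 0 | S N' => rsum f N' + f N' end.

Fixpoint rprod (f : nat -> R) (N : nat) : R :=
  match N with O => 1 | S N' => rprod f N' * f N' end.

(* Parameters: n = 4^k, sqrt n = s = 2^k, l = s/2 = 2^(k-1). *)
Definition nn (k : nat) : nat := 4 ^ k.
Definition sq (k : nat) : nat := 2 ^ k.
Definition ell (k : nat) : nat := Nat.div (sq k) 2.

(* block (1-indexed) of the 1-indexed position p in [n] *)
Definition block (k p : nat) : nat := Nat.div (p - 1) (sq k) + 1.

(* P[h_p = 1] for p in [n], per the definition of H_1 *)
Definition prob1 (k p : nat) : R :=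
  let c := block k p in
  if Nat.leb c (ell k)
  then / 2 + / (2 * INR (ell k + 1 - c))
  else / 2 - / (2 * INR (c - ell k)).

(* A point of {-1,1}^[n] is encoded by m in [0, 2^n): h_p = 1 iff bit (p-1) of m is set. *)
Definition redidx (k q : nat) : nat := Nat.modulo (q - 1) (nn k) + 1.

Definition hval (k m q : nat) : R :=
  if Nat.testbit m (redidx k q - 1) then 1 else -1.

Definition weight (k m : nat) : R :=
  rprod (fun t => if Nat.testbit m t then prob1 k (t + 1) else 1 - prob1 k (t + 1))
        (nn k).

(* E_{h ~ H_1} [h_a h_b]  (indices a, b >= 1, taken modulo n) *)
Definition Eprod (k a b : nat) : R :=
  rsum (fun m => weight k m * (hval k m a * hval k m b)) (2 ^ nn k).

(* Main.v *)
Require Import Defs.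
From Stdlib Require Import Reals Arith Lia Lra.
Open Scope R_scope.

Lemma rsum_ext f g N : (forall x, (x < N)%nat -> f x = g x) -> rsum f N = rsum g N.
Proof. induction N; simpl; intros H; auto. rewrite IHN by (intros; apply H; lia). rewrite H by lia; auto. Qed.

Lemma rprod_ext f g N : (forall x, (x < N)%nat -> f x = g x) -> rprod f N = rprod g N.
Proof. induction N; simpl; intros H; auto. rewrite IHN by (intros; apply H; lia). rewrite H by lia; auto. Qed.

Lemma rsum_scal c f N : rsum (fun m => c * f m) N = c * rsum f N.
Proof. induction N; simpl; [ring|]. rewrite IHN; ring. Qed.

Lemma rsum_plus f g N : rsum (fun m => f m + g m) N = rsum f N + rsum g N.
Proof. induction N; simpl; [ring|]. rewrite IHN; ring. Qed.

Lemma rsum_le f g N : (forall x, (x < N)%nat -> f x <= g x) -> rsum f N <= rsum g N.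
Proof. induction N; simpl; intros H; [lra|]. pose proof (H N ltac:(lia)). pose proof (IHN ltac:(intros; apply H; lia)). lra. Qed.

Lemma rsum_nonpos f N : (forall x, (x < N)%nat -> f x <= 0) -> rsum f N <= 0.
Proof. induction N; simpl; intros H; [lra|]. pose proof (H N ltac:(lia)). pose proof (IHN ltac:(intros; apply H; lia)). lra. Qed.

Lemma rsum_nonneg f N : (forall x, (x < N)%nat -> 0 <= f x) -> 0 <= rsum f N.
Proof. induction N; simpl; intros H; [lra|]. pose proof (H N ltac:(lia)). pose proof (IHN ltac:(intros; apply H; lia)). lra. Qed.

Lemma rprod_mul f g N : rprod (fun t => f t * g t) N = rprod f N * rprod g N.
Proof. induction N; simpl; [ring|]. rewrite IHN; ring. Qed.

Lemma rprod_shift f N : rprod f (S N) = f O * rprod (fun t => f (S t)) N.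
Proof. induction N; simpl in *; [ring|]. rewrite IHN; ring. Qed.

Lemma rsum_shift f N : rsum f (S N) = f O + rsum (fun t => f (S t)) N.
Proof. induction N; simpl in *; [ring|]. rewrite IHN; ring. Qed.

Lemma rsum_split f a b : rsum f (a + b) = rsum f a + rsum (fun x => f (a + x)%nat) b.
Proof. induction b; simpl; [rewrite Nat.add_0_r; ring|]. rewrite Nat.add_succ_r; simpl. rewrite IHb; ring. Qed.

Lemma rsum_S f n : rsum f (S n) = rsum f n + f n.
Proof. reflexivity. Qed.

Lemma rsum_double f M : rsum f (2 * M) = rsum (fun m => f (2 * m)%nat + f (2 * m + 1)%nat) M.
Proof. induction M. simpl; ring. replace (2 * S M)%nat with (S (S (2 * M))) by lia. change (rsum f (S (S (2*M)))) with (rsum f (2*M) + f (2*M)%nat + f (S (2*M))). rewrite rsum_S. rewrite IHM.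
  replace (2 * M + 1)%nat with (S (2*M)) by lia. ring. Qed.

Lemma rsum_rev f N : rsum f N = rsum (fun x => f (N - 1 - x)%nat) N.
Proof. induction N; [reflexivity|]. rewrite rsum_S, (rsum_shift (fun x => f (S N - 1 - x)%nat)). rewrite IHN.
  replace (S N - 1 - 0)%nat with N by lia. rewrite Rplus_comm. f_equal. apply rsum_ext; intros. f_equal. lia. Qed.

Lemma key N : forall F : nat -> bool -> R,
  rsum (fun m => rprod (fun t => F t (Nat.testbit m t)) N) (2 ^ N) = rprod (fun t => F t true + F t false) N.
Proof.
  induction N; intros F. simpl. ring.
  rewrite Nat.pow_succ_r by lia. rewrite rsum_double.
  rewrite rprod_shift.
  transitivity (rsum (fun m => (F O false + F O true) * rprod (fun t => F (S t) (Nat.testbit m t)) N) (2 ^ N)).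
  - apply rsum_ext; intros m _. rewrite !rprod_shift. rewrite Nat.testbit_even_0, Nat.testbit_odd_0.
    rewrite (rprod_ext (fun t => F (S t) (Nat.testbit (2 * m) (S t))) (fun t => F (S t) (Nat.testbit m t))).
    rewrite (rprod_ext (fun t => F (S t) (Nat.testbit (2 * m + 1) (S t))) (fun t => F (S t) (Nat.testbit m t))). ring.
    intros; rewrite Nat.testbit_odd_succ by lia; auto.
    intros; rewrite Nat.testbit_even_succ by lia; auto.
  - rewrite rsum_scal. rewrite (IHN (fun t b => F (S t) b)). ring.
Qed.

Lemma rprod_one N : rprod (fun _ => 1) N = 1.
Proof. induction N; simpl; [|rewrite IHN]; ring. Qed.

Lemma rprod_ind (c : R) a N : (a < N)%nat -> rprod (fun t => if Nat.eqb t a then c else 1) N = c.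
Proof. induction N; intros H; [lia|]. simpl. destruct (Nat.eqb_spec N a).
  - subst. rewrite (rprod_ext _ (fun _ => 1)). rewrite rprod_one; ring.
    intros x Hx. destruct (Nat.eqb_spec x a); [lia|auto].
  - rewrite IHN by lia. ring. Qed.


Definition mu k p := 2 * prob1 k p - 1.

Lemma Eprod_eq k a b : (1 <= a)%nat -> (1 <= b)%nat -> redidx k a <> redidx k b ->
  Eprod k a b = mu k (redidx k a) * mu k (redidx k b).
Proof.
  intros Ha Hb Hab. unfold Eprod.
  assert (Hn : (0 < nn k)%nat) by (unfold nn; apply Nat.neq_0_lt_0, Nat.pow_nonzero; lia).
  set (A := (redidx k a - 1)%nat). set (B := (redidx k b - 1)%nat).
  assert (HA : (A < nn k)%nat) by (unfold A, redidx; pose proof (Nat.mod_upper_bound (a-1) (nn k)); lia).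
  assert (HB : (B < nn k)%nat) by (unfold B, redidx; pose proof (Nat.mod_upper_bound (b-1) (nn k)); lia).
  assert (HAB : A <> B) by (unfold A, B, redidx in *; lia).
  set (w := fun t (bt : bool) => if bt then prob1 k (t + 1) else 1 - prob1 k (t + 1)).
  set (sg := fun bt : bool => if bt then 1 else -1).
  set (F := fun t bt => w t bt * ((if Nat.eqb t A then sg bt else 1) * (if Nat.eqb t B then sg bt else 1))).
  transitivity (rsum (fun m => rprod (fun t => F t (Nat.testbit m t)) (nn k)) (2 ^ nn k)).
  - apply rsum_ext; intros m _. unfold F. rewrite !rprod_mul.
    unfold weight. f_equal. f_equal.
    + unfold hval. fold A. rewrite (rprod_ext _ (fun t => if Nat.eqb t A then sg (Nat.testbit m A) else 1)). rewrite rprod_ind by auto. unfold sg; auto. intros t _; destruct (Nat.eqb_spec t A); subst; auto.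
    + unfold hval. fold B. rewrite (rprod_ext _ (fun t => if Nat.eqb t B then sg (Nat.testbit m B) else 1)). rewrite rprod_ind by auto. unfold sg; auto. intros t _; destruct (Nat.eqb_spec t B); subst; auto.
  - rewrite key. unfold F, w, sg.
    rewrite (rprod_ext _ (fun t => (if Nat.eqb t A then mu k (redidx k a) else 1) * (if Nat.eqb t B then mu k (redidx k b) else 1))).
    rewrite rprod_mul, !rprod_ind by auto. ring.
    intros t Ht. unfold mu. destruct (Nat.eqb_spec t A); destruct (Nat.eqb_spec t B); try lia.
    + subst t. replace (A + 1)%nat with (redidx k a) by (unfold A, redidx; lia). ring.
    + subst t. replace (B + 1)%nat with (redidx k b) by (unfold B, redidx; lia). ring.
    + ring.
Qed.

Definition W k b := if Nat.leb (b+1) (ell k) then / INR (ell k + 1 - (b+1)) else - / INR ((b+1) - ell k).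

Lemma mu_W k p : mu k p = W k (block k p - 1).
Proof. unfold mu, prob1, W. replace (block k p - 1 + 1)%nat with (block k p) by (unfold block; lia).
  destruct (Nat.leb _ _); rewrite Rinv_mult; lra. Qed.

Lemma sq_pos k : (0 < sq k)%nat.
Proof. unfold sq. apply Nat.neq_0_lt_0, Nat.pow_nonzero; lia. Qed.

Lemma nn_sq k : nn k = (sq k * sq k)%nat.
Proof. unfold nn, sq. rewrite <- Nat.pow_mul_l. reflexivity. Qed.

Lemma redidx_form k i d : (1 <= i)%nat ->
  (redidx k (i + d * sq k) - 1 = (i - 1) mod sq k + sq k * (((i - 1) / sq k + d) mod sq k))%nat.
Proof.
  intros Hi. pose proof (sq_pos k). set (s := sq k) in *. unfold redidx. rewrite nn_sq. fold s.
  replace (i + d * s - 1)%nat with (((i - 1) / s + d) * s + (i-1) mod s)%nat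
    by (pose proof (Nat.div_mod_eq (i-1) s); nia).
  rewrite Nat.Div0.mod_mul_r. rewrite Nat.add_sub.
  rewrite Nat.div_add_l by lia. rewrite (Nat.div_small ((i-1) mod s)) by (apply Nat.mod_upper_bound; lia).
  rewrite Nat.add_0_r. f_equal. rewrite Nat.add_comm, Nat.Div0.mod_add. apply Nat.Div0.mod_mod.
Qed.

Lemma block_form k i d : (1 <= i)%nat ->
  (block k (redidx k (i + d * sq k)) - 1 = ((i - 1) / sq k + d) mod sq k)%nat.
Proof.
  intros Hi. pose proof (sq_pos k). unfold block at 1. rewrite redidx_form by auto.
  rewrite Nat.add_sub. rewrite Nat.add_comm, (Nat.mul_comm (sq k)), Nat.div_add_l by lia.
  rewrite (Nat.div_small ((i-1) mod sq k)) by (apply Nat.mod_upper_bound; lia). lia.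
Qed.

Lemma mod_neq x y n : (x < y)%nat -> (y - x < n)%nat -> x mod n <> y mod n.
Proof. intros H1 H2 H3. pose proof (Nat.div_mod_eq x n). pose proof (Nat.div_mod_eq y n).
  rewrite H3 in *. set (r := y mod n) in *. set (q1 := (x / n)%nat) in *. set (q2 := (y / n)%nat) in *.
  destruct (Nat.le_gt_cases q2 q1); nia. Qed.

Lemma shift_sum (G : nat -> R) a s : (0 < s)%nat -> rsum (fun d => G ((a + d) mod s)%nat) s = rsum G s.
Proof.
  intros Hs. rewrite (rsum_ext _ (fun d => G ((a mod s + d) mod s)%nat)).
  2:{ intros; rewrite Nat.Div0.add_mod_idemp_l; auto. }
  assert (Ha : (a mod s < s)%nat) by (apply Nat.mod_upper_bound; lia).
  set (b := a mod s) in *. clearbody b.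
  assert (E1 := rsum_split (fun d => G ((b + d) mod s)%nat) (s - b) b).
  assert (E2 := rsum_split G b (s - b)).
  replace (s - b + b)%nat with s in E1 by lia. replace (b + (s - b))%nat with s in E2 by lia.
  rewrite E1, E2.
  rewrite Rplus_comm. f_equal.
  - apply rsum_ext; intros x Hx. f_equal. replace (b + (s - b + x))%nat with (x + 1 * s)%nat by lia.
    rewrite Nat.Div0.mod_add. apply Nat.mod_small; lia.
  - apply rsum_ext; intros x Hx. f_equal. apply Nat.mod_small; lia.
Qed.

Definition T k D := rsum (fun x => W k x * W k ((x + D) mod sq k)%nat) (sq k).

Lemma reduce k i j : (1 <= i)%nat -> (i < j)%nat -> (j <= nn k)%nat ->
  rsum (fun d => Eprod k (i + d * sq k) (j + d * sq k)) (sq k) = T k (block k j - block k i).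
Proof.
  intros Hi Hij Hj. pose proof (sq_pos k). set (s := sq k) in *.
  assert (Hq : ((i-1)/s <= (j-1)/s)%nat) by (apply Nat.Div0.div_le_mono; lia).
  rewrite (rsum_ext _ (fun d => (fun x => W k x * W k ((x + (block k j - block k i)) mod s)%nat) (((i-1)/s + d) mod s)%nat)).
  - unfold T. fold s. apply (shift_sum (fun x => W k x * W k ((x + (block k j - block k i)) mod s)%nat)); lia.
  - intros d Hd. rewrite Eprod_eq.
    + rewrite !mu_W. unfold s. rewrite !block_form by lia. fold s. f_equal. f_equal.
      rewrite Nat.Div0.add_mod_idemp_l. f_equal. unfold block. fold s. lia.
    + lia.
    + lia.
    + unfold redidx. intros E. apply (mod_neq (i + d * s - 1) (j + d * s - 1) (nn k)). lia. lia. lia.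
Qed.

Lemma T_sym k D : (D <= sq k)%nat -> T k D = T k (sq k - D).
Proof.
  intros HD. pose proof (sq_pos k). unfold T. set (s := sq k) in *.
  transitivity (rsum (fun y => W k ((y + (s - D)) mod s)%nat * W k y) s).
  2:{ apply rsum_ext; intros; ring. }
  rewrite <- (shift_sum (fun y => W k ((y + (s - D)) mod s)%nat * W k y) D s) by lia.
  apply rsum_ext; intros d Hd. f_equal.
  - f_equal. rewrite Nat.Div0.add_mod_idemp_l. replace (D + d + (s - D))%nat with (d + 1 * s)%nat by lia.
    rewrite Nat.Div0.mod_add. rewrite Nat.mod_small; lia.
  - f_equal. rewrite Nat.add_comm. auto.
Qed.

Lemma sq_ell k : (1 <= k)%nat -> sq k = (2 * ell k)%nat /\ (1 <= ell k)%nat.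
Proof. intros Hk. unfold ell, sq. replace k with (S (k - 1)) by lia. rewrite Nat.pow_succ_r by lia.
  rewrite Nat.mul_comm, Nat.div_mul by lia. split; [lia|]. pose proof (Nat.pow_nonzero 2 (k-1)). lia. Qed.

Lemma W_lo k b : (b < ell k)%nat -> W k b = / INR (ell k - b).
Proof. intros H. unfold W. replace (Nat.leb (b+1) (ell k)) with true by (symmetry; apply Nat.leb_le; lia).
  do 2 f_equal; lia. Qed.

Lemma W_hi k b : (ell k <= b)%nat -> W k b = - / INR (b + 1 - ell k).
Proof. intros H. unfold W. replace (Nat.leb (b+1) (ell k)) with false by (symmetry; apply Nat.leb_gt; lia).
  auto. Qed.

Definition Hs r := rsum (fun b => / INR (b + 1)) r.
Definition g r x := / INR (x + 1) * / INR (x + 1 + r).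

Lemma INR_pos n : (0 < n)%nat -> 0 < INR n.
Proof. intros; apply lt_0_INR; lia. Qed.

Lemma rsum_opp f N : rsum (fun x => - f x) N = - rsum f N.
Proof. induction N; simpl; [|rewrite IHN]; ring. Qed.

Lemma split4 k r : (1 <= k)%nat -> (r <= ell k)%nat ->
  T k r <= 2 * rsum (g r) (ell k - r) - rsum (fun x => / INR (r - x) * / INR (x + 1)) r.
Proof.
  intros Hk Hr. destruct (sq_ell k Hk) as [Hs Hl]. unfold T. rewrite Hs.
  set (l := ell k) in *. set (L := (l - r)%nat).
  replace (2 * l)%nat with (L + r + L + r)%nat by lia.
  rewrite !rsum_split.
  assert (EA : rsum (fun x => W k x * W k ((x + r) mod (L + r + L + r))%nat) L = rsum (g r) L).
  { rewrite rsum_rev. apply rsum_ext; intros x Hx. rewrite Nat.mod_small by lia.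
    rewrite !W_lo by (unfold l, L in *; lia). unfold g. rewrite Rmult_comm. f_equal; f_equal; f_equal; unfold l, L in *; lia. }
  assert (EC : rsum (fun x => W k (L + r + x)%nat * W k ((L + r + x + r) mod (L + r + L + r))%nat) L = rsum (g r) L).
  { apply rsum_ext; intros x Hx. rewrite Nat.mod_small by lia.
    rewrite !W_hi by (unfold l, L in *; lia). unfold g.
    replace (L + r + x + 1 - ell k)%nat with (x + 1)%nat by (unfold l, L in *; lia).
    replace (L + r + x + r + 1 - ell k)%nat with (x + 1 + r)%nat by (unfold l, L in *; lia). ring. }
  assert (EB : rsum (fun x => W k (L + x)%nat * W k ((L + x + r) mod (L + r + L + r))%nat) r
     = - rsum (fun x => / INR (r - x) * / INR (x + 1)) r).
  { rewrite <- rsum_opp.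
    apply rsum_ext; intros x Hx. rewrite Nat.mod_small by lia.
    rewrite (W_lo k (L + x)%nat) by (unfold l, L in *; lia). rewrite (W_hi k (L + x + r)%nat) by (unfold l, L in *; lia).
    replace (ell k - (L + x))%nat with (r - x)%nat by (unfold l, L in *; lia).
    replace (L + x + r + 1 - ell k)%nat with (x + 1)%nat by (unfold l, L in *; lia). ring. }
  assert (ED : rsum (fun x => W k (L + r + L + x)%nat * W k ((L + r + L + x + r) mod (L + r + L + r))%nat) r <= 0).
  { apply rsum_nonpos; intros x Hx. replace (L + r + L + x + r)%nat with (x + 1 * (L + r + L + r))%nat by lia.
    rewrite Nat.Div0.mod_add, Nat.mod_small by lia.
    rewrite (W_lo k x) by (unfold l, L in *; lia). rewrite (W_hi k (L + r + L + x)%nat) by (unfold l, L in *; lia).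
    assert (0 < / INR (L + r + L + x + 1 - ell k)) by (apply Rinv_0_lt_compat, INR_pos; unfold l, L in *; lia).
    assert (0 < / INR (ell k - x)) by (apply Rinv_0_lt_compat, INR_pos; unfold l, L in *; lia).
    nra. }
  rewrite EA, EB, EC. lra.
Qed.

Lemma tele_id r L : (1 <= r)%nat ->
  INR r * rsum (g r) L + rsum (fun b => / INR (L + 1 + b)) r = Hs r.
Proof.
  intros Hr. induction L.
  - rewrite Rmult_0_r, Rplus_0_l. unfold Hs. apply rsum_ext; intros; do 2 f_equal; lia.
  - rewrite <- IHL. rewrite rsum_S, Rmult_plus_distr_l.
    assert (E : rsum (fun b => / INR (L + 1 + b)) (S r) = / INR (L + 1) + rsum (fun b => / INR (S L + 1 + b)) r).
    { rewrite rsum_shift. f_equal. f_equal; f_equal; lia. apply rsum_ext; intros; do 2 f_equal; lia. }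
    rewrite rsum_S in E.
    assert (E2 : INR r * g r L = / INR (L + 1) - / INR (L + 1 + r)).
    { unfold g. rewrite !plus_INR. simpl INR.
      assert (0 <= INR L) by apply pos_INR. assert (1 <= INR r) by (apply (le_INR 1); lia). field. lra. }
    replace (L + 1 + r)%nat with (L + 1 + r)%nat in E2 by lia. lra.
Qed.

Lemma G1 r L : (1 <= r)%nat -> rsum (g r) L <= Hs r / INR r.
Proof.
  intros Hr. pose proof (tele_id r L Hr) as HT.
  assert (0 <= rsum (fun b => / INR (L + 1 + b)) r) by (apply rsum_nonneg; intros; apply Rlt_le, Rinv_0_lt_compat, lt_0_INR; lia).
  assert (1 <= INR r) by (apply (le_INR 1); lia).
  apply Rmult_le_reg_l with (INR r). lra. unfold Rdiv. rewrite (Rmult_comm (Hs r)), <- Rmult_assoc, Rinv_r by lra. lra.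
Qed.

Lemma G2 r : rsum (fun x => / INR (r - x) * / INR (x + 1)) r = 2 * Hs r / INR (r + 1).
Proof.
  rewrite (rsum_ext _ (fun x => / INR (r + 1) * (/ INR (x + 1) + / INR (r - x)))).
  - rewrite rsum_scal, rsum_plus. fold (Hs r).
    replace (rsum (fun x => / INR (r - x)) r) with (Hs r). field. apply not_0_INR; lia.
    rewrite rsum_rev. unfold Hs. apply rsum_ext; intros; do 2 f_equal; lia.
  - intros x Hx. rewrite minus_INR by lia. rewrite !plus_INR. simpl INR.
    assert (INR x + 1 <= INR r) by (rewrite <- S_INR; apply le_INR; lia).
    assert (0 <= INR x) by apply pos_INR. field. lra.
Qed.

Lemma G0 L : rsum (g 0) L <= 2 - 2 / INR (L + 1).
Proof.
  induction L.
  - simpl. lra.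
  - rewrite rsum_S. unfold g at 2. rewrite !Nat.add_0_r.
    replace (INR (S L + 1)) with (INR L + 1 + 1) by (rewrite plus_INR, S_INR; simpl; ring).
    replace (INR (L + 1)) with (INR L + 1) in * by (rewrite plus_INR; simpl; ring).
    assert (0 <= INR L) by apply pos_INR.
    assert (Ha : / (INR L + 1) * (INR L + 1) = 1) by (field; lra).
    assert (Hb : / (INR L + 1 + 1) * (INR L + 1 + 1) = 1) by (field; lra).
    assert (0 < / (INR L + 1)) by (apply Rinv_0_lt_compat; lra).
    assert (0 < / (INR L + 1 + 1)) by (apply Rinv_0_lt_compat; lra).
    unfold Rdiv in *. nra.
Qed.

Lemma ln_le_sub x : 0 < x -> ln x <= x - 1.
Proof. intros Hx. pose proof (exp_ineq1_le (ln x)) as E. rewrite exp_ln in E by auto. lra. Qed.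

Lemma Hbound r : Hs (S r) <= 2 * ln (INR r + 3).
Proof.
  induction r.
  - unfold Hs; simpl. replace (0 + 3) with 3 by ring. pose proof ln_lt_2.
    assert (ln 2 < ln 3) by (apply ln_increasing; lra). lra.
  - unfold Hs in *. rewrite rsum_S. fold (Hs (S r)) in *. unfold Hs in IHr.
    rewrite S_INR.
    assert (0 <= INR r) by apply pos_INR.
    pose proof (ln_le_sub ((INR r + 3) / (INR r + 1 + 3)) ltac:(apply Rdiv_lt_0_compat; lra)) as H1.
    unfold Rdiv in H1. rewrite ln_mult, ln_Rinv in H1 by (try apply Rinv_0_lt_compat; lra).
    replace (INR (S r + 1)) with (INR r + 2) by (rewrite plus_INR, S_INR; simpl; ring).
    assert ((INR r + 3) / (INR r + 1 + 3) - 1 = - / (INR r + 4)) by (field; lra).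
    assert (/ (INR r + 2) <= 2 / (INR r + 4)).
    { assert (Ha : / (INR r + 2) * (INR r + 2) = 1) by (field; lra).
      assert (Hb : / (INR r + 4) * (INR r + 4) = 1) by (field; lra).
      assert (0 < / (INR r + 2)) by (apply Rinv_0_lt_compat; lra).
      assert (0 < / (INR r + 4)) by (apply Rinv_0_lt_compat; lra).
      unfold Rdiv in *. nra. }
    assert (/ (INR r + 4) = / (INR r + 1 + 3)) by (f_equal; ring).
    unfold Rdiv, Hs in *. lra.
Qed.

Lemma ln2_bounds : 0 < ln 2 <= 1.
Proof. pose proof ln_lt_2. split. lra. pose proof (exp_ineq1 1 ltac:(lra)).
  assert (ln 2 < ln (exp 1)) by (apply ln_increasing; lra). rewrite ln_exp in H1. lra. Qed.

Lemma final_ineq R h t : 1 <= R -> 0 <= h -> h <= 2 * ln (R + 2) ->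
  t <= 2 * h / R - 2 * h / (R + 1) -> t <= 16 * lg (R + 2) / (R + 1) ^ 2.
Proof.
  intros HR Hh0 Hh Ht. destruct ln2_bounds as [L1 L2].
  assert (Hl : 0 < ln (R + 2)) by (rewrite <- ln_1; apply ln_increasing; lra).
  set (l := ln (R + 2)) in *. unfold lg. fold l.
  set (a := / R). set (b := / (R + 1)). set (c := / ln 2).
  assert (Ha : a * R = 1) by (unfold a; field; lra).
  assert (Hb : b * (R + 1) = 1) by (unfold b; field; lra).
  assert (Hc : c * ln 2 = 1) by (unfold c; field; lra).
  assert (a > 0) by (unfold a; apply Rinv_0_lt_compat; lra).
  assert (b > 0) by (unfold b; apply Rinv_0_lt_compat; lra).
  assert (c >= 1) by nra.
  assert (E1 : 2 * h / R - 2 * h / (R + 1) = 2 * h * (a * b)).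
  { unfold a, b, Rdiv. field. lra. }
  assert (E2 : 16 * (l / ln 2) / (R + 1) ^ 2 = 16 * l * c * (b * b)).
  { unfold b, c, Rdiv. field. lra. }
  rewrite E2. rewrite E1 in Ht.
  assert (S2 : 0 < a * b) by nra.
  assert (E3 : a - 2 * b = a * b * (1 - R)) by (unfold a, b; field; lra).
  assert (0 <= a * b * (R - 1)) by (apply Rmult_le_pos; lra).
  assert (S1 : a <= 2 * b) by lra.
  assert (S3 : 2 * h * (a * b) <= 4 * l * (a * b)) by nra.
  assert (0 <= 4 * l * b * (2 * b - a)) by (apply Rmult_le_pos; [nra|lra]).
  assert (S4 : 4 * l * (a * b) <= 8 * l * (b * b)) by nra.
  assert (0 <= 8 * l * (b * b) * (c - 1)) by (apply Rmult_le_pos; [nra|lra]).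
  assert (S5 : 8 * l * (b * b) <= 16 * l * c * (b * b)) by nra.
  lra.
Qed.

Lemma lg2 : lg 2 = 1.
Proof. unfold lg. destruct ln2_bounds. field. lra. Qed.

Lemma Tbound k r : (1 <= k)%nat -> (r <= ell k)%nat ->
  T k r <= 16 * lg (INR r + 2) / (INR r + 1) ^ 2.
Proof.
  intros Hk Hr. pose proof (split4 k r Hk Hr) as Hs4.
  destruct r as [|r'].
  - simpl in Hs4. rewrite Nat.sub_0_r in Hs4. pose proof (G0 (ell k)).
    assert (0 < 2 / INR (ell k + 1)) by (apply Rdiv_lt_0_compat; [lra| apply lt_0_INR; lia]).
    simpl INR. replace (0 + 2) with 2 by ring. rewrite lg2. lra.
  - set (r := S r') in *. rewrite G2 in Hs4.
    pose proof (G1 r (ell k - r) ltac:(lia)).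
    pose proof (Hbound r').
    replace (INR r' + 3) with (INR r + 2) in H0 by (unfold r; rewrite S_INR; ring).
    assert (1 <= INR r) by (apply (le_INR 1); unfold r; lia).
    assert (0 <= Hs r) by (apply rsum_nonneg; intros; apply Rlt_le, Rinv_0_lt_compat, lt_0_INR; lia).
    apply (final_ineq (INR r) (Hs r)); auto.
    replace (INR (r + 1)) with (INR r + 1) in Hs4 by (rewrite plus_INR; simpl; ring).
    assert (2 * rsum (g r) (ell k - r) <= 2 * (Hs r / INR r)) by lra.
    unfold Rdiv in *. lra.
Qed.

Theorem lemma2p1 :
  exists C : R,
  forall (k i j : nat),
    (1 <= k)%nat -> (1 <= i)%nat -> (i < j)%nat -> (j <= nn k)%nat ->
    let c1 := block k i in
    let c2 := block k j in
    let r := Nat.min (c2 - c1) (sq k - (c2 - c1)) in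
    rsum (fun d => Eprod k (i + d * sq k) (j + d * sq k)) (sq k)
      <= C * lg (INR r + 2) / (INR r + 1) ^ 2.
Proof.
  exists 16. intros k i j Hk Hi Hij Hj c1 c2 r.
  rewrite reduce by lia. fold c1 c2.
  destruct (sq_ell k Hk) as [Hs Hl]. pose proof (sq_pos k).
  assert (Hc2 : (c2 <= sq k)%nat).
  { unfold c2, block. assert ((j - 1) / sq k < sq k)%nat; [|lia].
    apply Nat.Div0.div_lt_upper_bound. rewrite <- nn_sq. lia. }
  assert (Hc1 : (1 <= c1)%nat) by (unfold c1, block; lia).
  destruct (Nat.le_gt_cases (c2 - c1) (ell k)).
  - assert (r = c2 - c1)%nat by (unfold r; lia). rewrite <- H1. apply Tbound; lia.
  - assert (r = sq k - (c2 - c1))%nat by (unfold r; lia). rewrite T_sym by lia. rewrite <- H1. apply Tbound; lia.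
Qed.
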